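(* Let $k\ge0$ and $\ell\ge4$ be integers and let $G$ be a bipartite graph of order $n\ge (k+\lfloor\ell/2\rfloor-1)^2-(k+\lfloor\ell/2\rfloor-2)\ell+\ell^2k+\ell^2-\ell$ that contains no subgraph isomorphic to $kS_{\ell-1}\cup P_\ell$. Then $e(G)\le (k+\lfloor\ell/2\rfloor-1)n$.
   Context: $P_\ell$ is the path of order $\ell$; $S_{\ell-1}=K_{1,\ell-1}$ is the star of order $\ell$; $kS_{\ell-1}\cup P_\ell$ is the vertex-disjoint union of $k$ copies of $S_{\ell-1}$ and one $P_\ell$ (for $k=0$ it is just $P_\ell$). $e(G)$ is the number of edges. *)

(* Defs.v *)
From mathcomp Require Import all_boot all_order all_algebra.
Set Implicit Arguments. Unset Strict Implicit. Unset Printing Implicit Defensive.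

Definition simple_graph (T : finType) (adj : rel T) : Prop :=
  symmetric adj /\ irreflexive adj.

Definition edge_set (T : finType) (adj : rel T) : {set {set T}} :=
  [set E : {set T} | [exists u, exists v, adj u v && (E == [set u; v])]].

Definition num_edges (T : finType) (adj : rel T) : nat := #|edge_set adj|.

Definition bipartite (T : finType) (adj : rel T) : Prop :=
  exists A : {set T}, forall u v, adj u v -> (u \in A) != (v \in A).

(* Vertices i < k*l form k stars: the block of i is i %/ l and the
   center of each block is the vertex with i %% l = 0.
   Vertices k*l, ..., k*l + l - 1 form the path P_l (consecutive ones adjacent). *)
Definition starsPath_adj (k l : nat) : rel 'I_(k * l + l) :=
  fun i j =>
    if (i < k * l) && (j < k * l) then
      (i %/ l == j %/ l) && ((i %% l == 0) != (j %% l == 0))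
    else if (k * l <= i) && (k * l <= j) then
      (i.+1 == j :> nat) || (j.+1 == i :> nat)
    else false.

Definition contains_subgraph (T U : finType) (adjG : rel T) (adjH : rel U) : Prop :=
  exists f : U -> T, injective f /\ forall x y, adjH x y -> adjG (f x) (f y).
Arguments starsPath_adj : clear implicits.

(* Main.v *)
Require Import Defs.
From mathcomp Require Import all_boot all_order all_algebra.
From mathcomp Require Import zify.
Set Implicit Arguments. Unset Strict Implicit. Unset Printing Implicit Defensive.
Local Open Scope nat_scope.

Section G.
Variable T : finType.
Variable adj : rel T.
Hypothesis sym : symmetric adj.
Hypothesis irr : irreflexive adj.

Definition deg (S : {set T}) v := \sum_(u in S) (adj v u : nat).
Definition E2 (S : {set T}) := \sum_(v in S) deg S v.

Lemma degE (S : {set T}) v : deg S v = #|[set u in S | adj v u]|.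
Proof.
rewrite /deg -sum1_card; transitivity (\sum_(u in S | adj v u) 1).
  by rewrite big_mkcondr /=; apply: eq_bigr => u _; case: adj.
by apply: eq_bigl => u; rewrite inE.
Qed.

Lemma deg_sub (S S' : {set T}) v : S' \subset S -> deg S' v <= deg S v.
Proof.
move=> sub; rewrite !degE; apply: subset_leq_card; apply/subsetP => u.
by rewrite !inE => /andP[/(subsetP sub) -> ->].
Qed.

Lemma deg_le (S : {set T}) v : deg S v <= #|S|.
Proof. by rewrite degE; apply: subset_leq_card; apply/subsetP => u; rewrite inE => /andP[]. Qed.

Lemma removal (S X : {set T}) : X \subset S ->
  E2 S = E2 (S :\: X) + \sum_(x in X) deg S x
         + \sum_(u in S :\: X) \sum_(w in X) (adj u w : nat).
Proof.
move=> sub.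
have hS : S :&: X = X by apply/setIidPr.
rewrite /E2 (big_setID X) /= hS.
rewrite [RHS]addnAC -big_split /= addnC; congr (_ + _); apply: eq_bigr => u _.
by rewrite /deg (big_setID X) /= hS addnC.
Qed.

Lemma cross_le (S X : {set T}) : X \subset S ->
  \sum_(u in S :\: X) \sum_(w in X) (adj u w : nat) <= \sum_(x in X) deg S x.
Proof.
move=> sub; rewrite exchange_big /=; apply: leq_sum => x _.
rewrite /deg [X in _ <= X](big_setID (S :\: X)) /=.
have -> : S :&: (S :\: X) = S :\: X by apply/setIidPr; apply: subsetDl.
rewrite (eq_bigr (fun u => (adj x u : nat))) ?leq_addr // => u _.
by rewrite sym.
Qed.

Lemma removal_le (S X : {set T}) : X \subset S ->
  E2 S <= E2 (S :\: X) + 2 * \sum_(x in X) deg S x.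
Proof.
move=> sub; rewrite (removal sub) mul2n -addnn addnA leq_add2l.
exact: cross_le.
Qed.


Variable A : {set T}.
Hypothesis hA : forall u v, adj u v -> (u \in A) != (v \in A).
Variable x0 : T.

Definition pathS (S : {set T}) (p : seq T) :=
  [&& uniq p, sorted adj p & all (fun x => x \in S) p].

Lemma pathS_sub (S S' : {set T}) p : S \subset S' -> pathS S p -> pathS S' p.
Proof.
move=> sub /and3P[u s a]; apply/and3P; split => //.
by apply/allP => x /(allP a) /(subsetP sub).
Qed.

Lemma parity p i : sorted adj p -> i < size p ->
  (nth x0 p i \in A) = odd i (+) (nth x0 p 0 \in A).
Proof.
move=> /sortedP sp; elim: i => [|i IH] lti //=.
have := hA (sp x0 i lti); rewrite IH ?(ltnW lti) //.
by case: (nth x0 p i.+1 \in A); case: (odd i); case: (nth x0 p 0 \in A).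
Qed.

Definition nbseq p j := [seq nth x0 p i | i <- iota 0 (size p) & odd i != odd j].

Lemma nb_sub (S : {set T}) p j : sorted adj p -> j < size p ->
  (forall y, y \in S -> adj (nth x0 p j) y -> y \in p) ->
  [set y in S | adj (nth x0 p j) y] \subset [pred y in nbseq p j].
Proof.
move=> sp ltj hnb; apply/subsetP => y; rewrite inE => /andP[yS ay].
have yp := hnb y yS ay.
have hi : index y p < size p by rewrite index_mem.
have hy : nth x0 p (index y p) = y by rewrite nth_index.
apply/mapP; exists (index y p); last by rewrite hy.
rewrite mem_filter mem_iota /= hi andbT.
have h2 := parity sp hi; rewrite hy in h2.
have := hA ay; rewrite (parity sp ltj) h2.
by case: (odd j); case: (odd (index y p)); case: (nth x0 p 0 \in A).
Qed.

Lemma size_nbseq p j : size (nbseq p j) = count (fun i => odd i != odd j) (iota 0 (size p)).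
Proof. by rewrite size_map size_filter. Qed.

Lemma count_odd n : count odd (iota 0 n) = n./2.
Proof.
elim: n => [|n IH] //; rewrite -addn1 iotaD count_cat IH /= addn0 add0n.
rewrite addn1 -[n.+1]add1n halfD /=; case: (odd n) => /=; lia.
Qed.

Lemma count_par t b : count (fun i => odd i != b) (iota 0 t.*2) = t.
Proof.
elim: t => [|t IH] //; rewrite doubleS -addn2 iotaD count_cat IH /= add0n.
rewrite odd_double; case: b {IH} => /=; lia.
Qed.


Lemma pathS_size (S : {set T}) p : pathS S p -> size p <= #|S|.
Proof.
move=> /and3P[u _ a]; rewrite -(card_uniqP u); apply: subset_leq_card.
by apply/subsetP => x xq; exact: (allP a x xq).
Qed.

Lemma longest (S : {set T}) v : v \in S ->
  exists p, pathS S p /\ forall q, pathS S q -> size q <= size p.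
Proof.
move=> vS.
pose P := fun m => [exists q : m.-tuple T, pathS S q].
have ex : exists m, P m.
  exists 1; apply/existsP; exists [tuple v].
  by rewrite /pathS /= vS.
have bnd : forall m, P m -> m <= #|S|.
  by move=> m /existsP [q /pathS_size]; rewrite size_tuple.
case: (ex_maxnP ex bnd) => m /existsP [q hq] hmax.
exists q; split => // q' hq'; rewrite size_tuple; apply: hmax.
by apply/existsP; exists (in_tuple q').
Qed.

Lemma card_nb (S : {set T}) p j : sorted adj p -> j < size p ->
  (forall y, y \in S -> adj (nth x0 p j) y -> y \in p) ->
  deg S (nth x0 p j) <= count (fun i => odd i != odd j) (iota 0 (size p)).
Proof.
move=> sp lj hnb; rewrite degE -size_nbseq.
apply: leq_trans (card_size _); apply: subset_leq_card; exact: nb_sub.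
Qed.


Lemma E2_set0 : E2 set0 = 0.
Proof. by rewrite /E2 big_set0. Qed.

Lemma base t l : 2 <= t -> l <= t.*2.+1 -> forall S : {set T},
  2 * (t - 1) * #|S| < E2 S -> exists p, pathS S p /\ l <= size p.
Proof.
move=> t2 lt S; move: {2}#|S| (leqnn #|S|) => n; elim: n S => [|n IH] S hS H.
  move: hS; rewrite leqn0 => /eqP /cards0_eq hS0.
  by move: H; rewrite hS0 E2_set0.
case: (boolP [exists v in S, deg S v < t]).
  move=> /existsP [v /andP [vS dv]].
  have sub : [set v] \subset S by rewrite sub1set.
  have := removal_le sub; rewrite big_set1 => hE.
  have hc : #|S :\: [set v]| = #|S| - 1 by rewrite cardsD (setIidPr sub) cards1.
  have c1 : 0 < #|S| by apply/card_gt0P; exists v.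
  have h1 : #|S :\: [set v]| <= n by rewrite hc; lia.
  have h2 : 2 * (t - 1) * #|S :\: [set v]| < E2 (S :\: [set v]).
    rewrite hc mulnBr muln1.
    have : 2 * (t - 1) <= 2 * (t - 1) * #|S| by rewrite leq_pmulr.
    lia.
  have [p [hp hl]] := IH _ h1 h2.
  by exists p; split => //; apply: pathS_sub hp; exact: subsetDl.
rewrite negb_exists_in => /forallP hall.
have hdeg : forall v, v \in S -> t <= deg S v.
  by move=> v vS; have := hall v; rewrite vS /= -leqNgt.
have [v vS] : exists v, v \in S.
  apply/set0Pn; apply/negP => /eqP hS0; by move: H; rewrite hS0 E2_set0.
have [q [hq hmax]] := longest vS.
case: (leqP l (size q)) => hl; first by exists q; split.
have [a [p' Eq]] : exists a p', q = a :: p'.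
  case: q hq hmax hl => [|a p'] hq hmax hl; last by exists a, p'.
  by have := hmax [:: v]; rewrite /pathS /= vS => /(_ isT).
subst q.
have /and3P [uq sq aq] := hq.
have hnb0 : forall y, y \in S -> adj a y -> y \in a :: p'.
  move=> y yS ay; apply/negPn/negP => ny.
  have : size (y :: a :: p') <= size (a :: p').
    apply: hmax; rewrite /pathS /= yS; rewrite /= in uq sq aq.
    by rewrite ny uq sym ay sq aq.
  by rewrite /= ltnn.
have hsz : size (a :: p') = t.*2.
  have := card_nb sq (ltn0Sn _) hnb0.
  rewrite (eq_count (a2 := odd)) ?count_odd; last by move=> i /=; case: odd.
  have aS : a \in S by move: aq => /= /andP[].
  move=> /(leq_trans (hdeg a aS)) /= ht.
  have := odd_double_half (size p').+1; rewrite -muln2 -!muln2 in lt * => eh.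
  change ((size p').+1./2) with (uphalf (size p')) in eh.
  simpl in hl; lia.
have aS : a \in S by move: aq => /= /andP[].
have hlast : adj a (nth x0 (a :: p') (size p')).
  have sub := nb_sub sq (ltn0Sn (size p')) hnb0.
  have cnt : size (nbseq (a :: p') 0) = t by rewrite size_nbseq hsz /= count_par.
  have cardN : t <= #|[set y in S | adj a y]| by rewrite -degE; exact: hdeg.
  have eqN : #|[set y in S | adj a y]| = #|[pred y in nbseq (a :: p') 0]|.
    apply/eqP; rewrite eqn_leq subset_leq_card //=.
    by apply: leq_trans cardN; rewrite -cnt card_size.
  have /(subset_cardP eqN) eqNi := sub.
  suff : nth x0 (a :: p') (size p') \in [set y in S | adj a y] by rewrite inE => /andP[].
  rewrite eqNi /= /nbseq; apply/mapP; exists (size p') => //.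
  rewrite mem_filter mem_iota /= ltnSn andbT.
  have := congr1 odd hsz; rewrite odd_double /=.
  by case: (odd (size p')).
have hcyc : cycle adj (a :: p').
  by rewrite /= rcons_path (sq : path adj a p') /= (last_nth x0) sym.
have hno : forall y x, y \in S -> y \notin a :: p' -> x \in a :: p' -> ~~ adj y x.
  move=> y x yS ny xq; apply/negP => ayx.
  case: (rot_to xq) => i s' hrot.
  have hc' : cycle adj (x :: s') by rewrite -hrot rot_cycle.
  have ps' : path adj x s' by move: hc' => /=; rewrite rcons_path => /andP[].
  have u' : uniq (y :: x :: s') by rewrite cons_uniq -hrot mem_rot rot_uniq ny uq.
  have a' : all (fun z => z \in S) (y :: x :: s').
    apply/allP => z; rewrite in_cons => /orP [/eqP -> // | ].
    by rewrite -hrot mem_rot => zq; exact: (allP aq).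
  have : size (y :: x :: s') <= size (a :: p').
    by apply: hmax; rewrite /pathS u' a' /= ayx ps'.
  have := congr1 size hrot; rewrite size_rot /= => <-; by rewrite ltnn.
have hdegp : forall x, x \in a :: p' -> deg S x <= t.
  move=> x xq.
  have hx : nth x0 (a :: p') (index x (a :: p')) = x by rewrite nth_index.
  rewrite -{1}hx; apply: leq_trans (card_nb sq _ _) _.
  - by rewrite index_mem.
  - move=> y yS; rewrite hx => axy; apply/negPn/negP => ny.
    by have := hno y x yS ny xq; rewrite sym axy.
  - by rewrite hsz count_par.
set X := [set z in a :: p'].
have XS : X \subset S by apply/subsetP => z; rewrite inE => zq; exact: (allP aq).
have cX : #|X| = t.*2 by rewrite cardsE (card_uniqP uq) hsz.
have hrem := removal XS.
have cross0 : \sum_(u in S :\: X) \sum_(w in X) (adj u w : nat) = 0.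
  apply: big1 => u; rewrite inE => /andP [uX uS]; apply: big1 => w wX.
  rewrite inE in uX; rewrite inE in wX.
  by have := hno u w uS uX wX; move/negbTE => ->.
have sumX : \sum_(x in X) deg S x <= t.*2 * t.
  rewrite -cX -sum_nat_const; apply: leq_sum => x; rewrite inE; exact: hdegp.
have cSX : #|S :\: X| = #|S| - t.*2 by rewrite cardsD (setIidPr XS) cX.
have cge : t.*2 <= #|S| by rewrite -cX subset_leq_card.
have h1 : #|S :\: X| <= n by rewrite cSX; lia.
have h2 : 2 * (t - 1) * #|S :\: X| < E2 (S :\: X).
  rewrite cSX mulnBr.
  have f1 : t.*2 * t <= 2 * (t - 1) * t.*2 by rewrite -!muln2; nia.
  have f2 : 2 * (t - 1) * t.*2 <= 2 * (t - 1) * #|S| by rewrite leq_mul2l cge orbT.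
  rewrite cross0 addn0 in hrem.
  lia.
have [p [hp hlp]] := IH _ h1 h2.
by exists p; split => //; apply: pathS_sub hp; exact: subsetDl.
Qed.


Definition stars l Q := forall i, i < size Q -> i %% l != 0 ->
  adj (nth x0 Q i) (nth x0 Q (i - i %% l)).

Lemma stars_nil l : stars l [::].
Proof. by []. Qed.

Lemma stars_block l v L : size L = l.-1 -> 0 < l ->
  (forall y, y \in L -> adj v y) -> stars l (v :: L).
Proof.
move=> sL l0 hL i; rewrite /= sL prednK // => il; rewrite modn_small // => i0.
rewrite subnn /=; case: i i0 il => [|j] // _ jl; rewrite sym; apply: hL.
by rewrite /= mem_nth // sL -ltnS prednK.
Qed.

Lemma stars_cat l Q1 Q2 a : size Q1 = a * l -> stars l Q1 -> stars l Q2 ->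
  stars l (Q1 ++ Q2).
Proof.
move=> s1 h1 h2 i; rewrite size_cat => il im.
case: (ltnP i (size Q1)) => ii.
  have ii' : i - i %% l < size Q1 by apply: leq_ltn_trans ii; exact: leq_subr.
  by rewrite !nth_cat ii ii'; apply: h1.
have [j ej] : exists j, i = size Q1 + j by exists (i - size Q1); rewrite subnKC.
subst i; move: im; rewrite s1 modnMDl => im.
have jm : j %% l <= j by exact: leq_mod.
have -> : a * l + j - j %% l = a * l + (j - j %% l) by lia.
rewrite !nth_cat -s1 !ltnNge !leq_addr /= !addKn; apply: h2 => //.
by move: il; rewrite ltn_add2l.
Qed.


Lemma small t l Dm1 : 2 <= t -> l <= t.*2.+1 -> 4 <= l -> forall m (S : {set T}),
  (0 < m -> forall v, v \in S -> deg S v <= Dm1) ->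
  2 * (m + t - 1) * #|S| < E2 S ->
  (0 < m -> l * (Dm1 + m) <= #|S| + l * t) ->
  exists Q P, [/\ size Q = m * l, stars l Q, size P = l, sorted adj P &
                  uniq (Q ++ P) && all (fun x => x \in S) (Q ++ P)].
Proof.
move=> t2 lt l4; elim => [|m IH] S hD hE hth.
  rewrite add0n in hE.
  have [p [/and3P [up sp ap] lp]] := base t2 lt hE.
  exists [::], (take l p); split => //=.
  - exact: size_takel.
  - apply/(sortedP x0) => i; rewrite size_takel // => hi.
    rewrite !nth_take //; last exact: ltnW.
    by apply: (sortedP x0 sp); apply: leq_trans lp.
  - rewrite take_uniq //=; by apply/allP => z /mem_take /(allP ap).
have hD' := hD (ltn0Sn m); have hth' := hth (ltn0Sn m).
have [v vS dv] : exists2 v, v \in S & l.-1 <= deg S v.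
  case: (boolP [exists v in S, l.-1 <= deg S v]) => [/exists_inP [v vS dv]|]; first by exists v.
  rewrite negb_exists_in => /forallP hall.
  have : E2 S <= \sum_(v in S) l.-2.
    apply: leq_sum => v vS; have := hall v; rewrite vS /= -ltnNge.
    lia.
  rewrite sum_nat_const.
  have : #|S| * l.-2 <= 2 * (m.+1 + t - 1) * #|S|.
    rewrite mulnC leq_mul2r; apply/orP; right; lia.
  lia.
set N := [set u in S | adj v u].
have cN : l.-1 <= #|N| by rewrite -degE.
set L := take l.-1 (enum N).
have sL : size L = l.-1 by rewrite size_takel // -cardE.
have LN : forall y, y \in L -> y \in N by move=> y /mem_take; rewrite mem_enum.
have uL : uniq L by rewrite take_uniq // enum_uniq.
have vL : v \notin L by apply/negP => /LN; rewrite inE irr andbF.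
set X := [set z in v :: L].
have cX : #|X| = l by rewrite cardsE (card_uniqP _) /= ?sL ?vL ?uL //; lia.
have XS : X \subset S.
  apply/subsetP => z; rewrite inE in_cons => /orP [/eqP -> // | /LN].
  by rewrite inE => /andP[].
have hrem := removal_le XS.
have sumX : \sum_(x in X) deg S x <= l * Dm1.
  rewrite -cX -sum_nat_const; apply: leq_sum => x xX; apply: hD'.
  exact: (subsetP XS).
have cSX : #|S :\: X| = #|S| - l by rewrite cardsD (setIidPr XS) cX.
have cge : l <= #|S| by rewrite -cX subset_leq_card.
have hD2 : 0 < m -> forall v, v \in S :\: X -> deg (S :\: X) v <= Dm1.
  move=> _ w wS; apply: leq_trans (deg_sub _ (subsetDl S X)) _.
  apply: hD'; exact: (subsetP (subsetDl S X)).
have hE2 : 2 * (m + t - 1) * #|S :\: X| < E2 (S :\: X).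
  rewrite cSX; nia.
have hth2 : 0 < m -> l * (Dm1 + m) <= #|S :\: X| + l * t by move=> _; rewrite cSX; nia.
have [Q' [P [sQ' stQ' sP spP /andP [uQP aQP]]]] := IH _ hD2 hE2 hth2.
exists ((v :: L) ++ Q'), P; split => //.
- by rewrite size_cat /= sL sQ' mulSn; lia.
- apply: (stars_cat (a := 1)) => //; first by rewrite /= sL mul1n; lia.
  apply: stars_block => //; first lia.
  by move=> y /LN; rewrite inE => /andP[].
- have inSX : forall z, z \in Q' ++ P -> z \in S :\: X by move=> z /(allP aQP).
  rewrite -catA cat_uniq uQP cons_uniq vL uL /= andbT all_cat; apply/andP; split.
    by apply/hasPn => z /inSX; rewrite !inE => /andP [zX _].
  apply/and3P; split; first by [].
    apply/allP => z zX; apply: (subsetP XS); by rewrite inE in_cons zX orbT.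
  by apply/allP => z /inSX; rewrite inE => /andP[].
Qed.


Lemma bigstars l K : 0 < l -> forall cs R, uniq (cs ++ R) ->
  (forall c, c \in cs -> K + l.-1 <= deg setT c) ->
  size R + size cs * l <= K + l ->
  exists Qb, [/\ size Qb = size cs * l, stars l Qb & uniq (Qb ++ R)].
Proof.
move=> l0; elim => [|c cs IH] R uR hdeg hsz; first by exists [::].
have uR' : uniq (cs ++ c :: R).
  by rewrite -cat1s uniq_catCA cat1s -cat_cons.
have hsz' : size (c :: R) + size cs * l <= K + l by move: hsz => /=; rewrite mulSn; lia.
have [Q' [sQ' stQ' uQ']] := IH (c :: R) uR' (fun c' h => hdeg c' (mem_behead (s := c :: cs) h)) hsz'.
have := uQ'; rewrite -cat1s uniq_catCA cat1s cons_uniq => /andP [cQR uQR].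
set N := [set u | adj c u] :\: [set u in Q' ++ R].
have cN : l.-1 <= #|N|.
  have h1 := hdeg c (mem_head _ _).
  rewrite degE in h1.
  have e1 : [set u in setT | adj c u] = [set u | adj c u] by apply/setP => u; rewrite !inE.
  rewrite e1 in h1.
  rewrite cardsD.
  have h2 : #|[set u | adj c u] :&: [set u in Q' ++ R]| <= size (Q' ++ R).
    apply: leq_trans (card_size (Q' ++ R)); apply: subset_leq_card.
    by apply/subsetP => u; rewrite !inE => /andP[_].
  move: h2 hsz; rewrite size_cat sQ' /= mulSn; lia.
set L := take l.-1 (enum N).
have sL : size L = l.-1 by rewrite size_takel // -cardE.
have LN : forall y, y \in L -> y \in N by move=> y /mem_take; rewrite mem_enum.
have uL : uniq L by rewrite take_uniq // enum_uniq.
have cL : c \notin L by apply/negP => /LN; rewrite !inE => /andP [_]; rewrite irr.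
exists ((c :: L) ++ Q'); split.
- rewrite size_cat /= sL sQ' mulSn.
  by rewrite prednK.
- apply: (stars_cat (a := 1)) => //; first by rewrite /= sL mul1n; lia.
  apply: stars_block => //.
  by move=> y /LN; rewrite !inE => /andP[].
- rewrite -catA cat_uniq uQR cons_uniq cL uL /= andbT.
  apply/hasPn => z zQR; rewrite in_cons negb_or; apply/andP; split.
    by apply/eqP => ezc; move: cQR; rewrite -ezc zQR.
  by apply/negP => /LN; rewrite !inE zQR.
Qed.


Lemma handshake : 2 * num_edges adj <= E2 setT.
Proof.
have bT : forall F : T -> nat, \sum_(v in [set: T]) F v = \sum_v F v.
  by move=> F; apply: eq_bigl => v; rewrite inE.
have -> : E2 setT = \sum_(p : T * T | adj p.1 p.2) 1.
  rewrite /E2 /deg bT (eq_bigr (fun v => \sum_u (adj v u : nat))); last first.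
    by move=> v _; rewrite bT.
  rewrite pair_big /= [RHS]big_mkcond /=; apply: eq_bigr => p _; by case: adj.
rewrite (partition_big (fun p : T * T => [set p.1; p.2]) (mem (edge_set adj))) /=; last first.
  move=> p hp; rewrite inE; apply/existsP; exists p.1; apply/existsP; exists p.2.
  by rewrite hp eqxx.
rewrite /num_edges mulnC -sum_nat_const; apply: leq_sum => E.
rewrite inE => /existsP [u /existsP [v /andP [huv /eqP ->]]].
rewrite (bigD1 (u, v)) /=; last by rewrite huv eqxx.
rewrite (bigD1 (v, u)) /=; last first.
  rewrite sym huv setUC eqxx /= xpair_eqE; apply/negP => /andP [/eqP e _].
  by move: huv; rewrite e irr.
by rewrite addnA leq_addr.
Qed.

End G.

Lemma key k t l : 1 <= t -> (l = t.*2 \/ l = t.*2.+1) -> 2 * k * l <= (k + t - 1) ^ 2 + 3 * l.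
Proof.
move=> t1 [->|->]; rewrite -muln2.
  case: (leqP (t + 1) k) => h.
    have [j ->] : exists j, k = t + 1 + j by exists (k - (t + 1)); lia.
    nia.
  have [j ej] : exists j, t = k + j by exists (t - k); lia.
  subst t; nia.
case: (leqP (t + 2) k) => h.
  have [j ->] : exists j, k = t + 2 + j by exists (k - (t + 2)); lia.
  nia.
have [j ej] : exists j, t + 1 = k + j by exists (t + 1 - k); lia.
case: k h ej => [|k] h ej; first nia.
have ej' : t = k + j by lia.
subst t; nia.
Qed.

Lemma arith k l t c n : 2 <= t -> t.*2 <= l -> l <= t.*2.+1 -> c < k ->
  (k + t - 1) ^ 2 + (l ^ 2 * k + l ^ 2 - l) <= n + (k + t - 2) * l ->
  l * (k * l + l - 2 + (k - c)) <= n - c + l * t.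
Proof.
move=> t2 l1 l2 ck h.
have hk : 2 * k * l <= (k + t - 1) ^ 2 + 3 * l.
  apply: key; first lia.
  case: (ltngtP l t.*2) => e; [lia | right; lia | by left].
have e1 : l * (k * l + l - 2 + (k - c)) + c <= l * (k * l + l - 2 + k).
  have f : c <= l * c by rewrite leq_pmull; lia.
  have f2 : l * c <= l * k by rewrite leq_mul2l; apply/orP; right; lia.
  rewrite !mulnDr mulnBr; lia.
have e2 : l * (k * l + l - 2 + k) = k * l * l + l * l + k * l - 2 * l.
  have l2' : 2 <= l by lia.
  have -> : k * l + l - 2 + k = k * l + k + (l - 2) by lia.
  rewrite !mulnDr mulnBr [l * (k * l)]mulnC [l * k]mulnC [l * 2]mulnC.
  have : 2 * l <= l * l by rewrite leq_mul2r l2' orbT.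
  lia.
have e3 : (k + t - 2) * l = k * l + t * l - 2 * l.
  rewrite !mulnBl mulnDl; lia.
have e4 : l ^ 2 * k + l ^ 2 - l = k * l * l + l * l - l.
  rewrite expnS expn1 mulnC mulnA; lia.
rewrite e3 e4 in h.
have : l <= l * l by rewrite leq_pmull; lia.
have : 2 * l <= t * l by rewrite leq_mul2r t2 orbT.
move: hk h e1 e2; rewrite -mulnA.
set Q := (k + t - 1) ^ 2; set L1 := l * (_ + _); set A1 := k * l * l; set A2 := l * l; set A3 := k * l; set A4 := t * l.
rewrite [l * t]mulnC -/A4 -/A3.
set B := l * (A3 + l - 2 + k).
clearbody Q L1 A1 A2 A3 A4 B.
lia.
Qed.

Unset Implicit Arguments.

Lemma aux1 (a b m l : nat) : a.+1 = b -> m <= a -> b < m + l -> (a - m).+1 < l.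
Proof. lia. Qed.

Theorem lemma3p2 (k l : nat) (T : finType) (adj : rel T) :
  4 <= l ->
  simple_graph adj ->
  bipartite adj ->
  (((k + l./2 - 1) ^ 2)%:Z - ((k + l./2 - 2) * l)%:Z
     + (l ^ 2 * k + l ^ 2 - l)%:Z <= (#|T|)%:Z)%R ->
  ~ contains_subgraph adj (starsPath_adj k l) ->
  num_edges adj <= (k + l./2 - 1) * #|T|.
Proof.
move=> l4 [sym irr] [A hA] hn hno.
have hl := odd_double_half l.
have hn' : (k + l./2 - 1) ^ 2 + (l ^ 2 * k + l ^ 2 - l) <= #|T| + (k + l./2 - 2) * l.
  lia.
move: hn' hl; set t := l./2 => hn' hl; clear hn.
have lt1 : t.*2 <= l by move: hl; case: (odd l) => /= <-; rewrite ?leq_addl.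
have lt2 : l <= t.*2.+1 by move: hl; case: (odd l) => /= <-.
have t2 : 2 <= t by lia.
rewrite leqNgt; apply/negP => hgt; apply: hno.
set n := #|T|.
have hE : 2 * (k + t - 1) * n < E2 adj setT.
  apply: leq_trans (handshake sym irr); rewrite -mulnA ltn_mul2l /=; exact: hgt.
case: (pickP (fun _ : T => true)) => [x0 _|h0]; last first.
  by move: hE; rewrite /E2 big_pred0 // => v; have := h0 v.
set B := [set v | k * l + l.-1 <= deg adj setT v].
set cs := take k (enum B).
have ucs : uniq cs by rewrite take_uniq // enum_uniq.
have csB : forall c, c \in cs -> c \in B by move=> c /mem_take; rewrite mem_enum.
set c := size cs.
have ck : c <= k by rewrite /c size_take; case: ifP => // /negbT; rewrite -leqNgt.
set X := [set x in cs].
have cX : #|X| = c by rewrite cardsE (card_uniqP ucs).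
set S0 := setT :\: X.
have XT : X \subset setT by apply: subsetT.
have cS0 : #|S0| = n - c by rewrite cardsD setTI cardsT cX.
have hrem := removal_le sym XT.
have sX : \sum_(x in X) deg adj setT x <= c * n.
  rewrite -cX -sum_nat_const; apply: leq_sum => x _; rewrite /n -cardsT; exact: deg_le.
have hE0 : 2 * (k - c + t - 1) * #|S0| < E2 adj S0.
  rewrite cS0.
  have e : (k - c + t - 1) * n + c * n = (k + t - 1) * n by rewrite -mulnDl; congr (_ * _); lia.
  have f : (k - c + t - 1) * (n - c) <= (k - c + t - 1) * n by rewrite leq_mul2l leq_subr orbT.
  move: e f hE hrem sX; rewrite -!mulnA.
  set P1 := (k - c + t - 1) * n; set P2 := c * n; set P3 := (k + t - 1) * n.
  set P4 := (k - c + t - 1) * (n - c); set P5 := \sum_(x in X) deg adj setT x.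
  clearbody P1 P2 P3 P4 P5; rewrite -/S0; lia.
have hD : 0 < k - c -> forall v, v \in S0 -> deg adj S0 v <= k * l + l - 2.
  move=> kc v; rewrite inE => /andP [vX _].
  have eB : cs = enum B.
    rewrite /cs take_oversize //; move: kc; rewrite /c /cs size_take.
    case: ifP => [_|/negbT]; [by rewrite subnn | by rewrite -leqNgt].
  have vB : v \notin B by move: vX; rewrite inE eB mem_enum.
  move: vB; rewrite inE -ltnNge => vB.
  apply: leq_trans (deg_sub adj v (subsetT S0)) _; lia.
have hth : 0 < k - c -> l * (k * l + l - 2 + (k - c)) <= #|S0| + l * t.
  move=> kc; rewrite cS0; apply: arith => //; lia.
have [Q [P [sQ stQ sP spP /andP [uQP aQP]]]] := small sym irr hA x0 t2 lt2 l4 hD hE0 hth.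
have inS0 : forall z, z \in Q ++ P -> z \notin cs.
  move=> z /(allP aQP); rewrite !inE => /andP [h _]; exact: h.
have u1 : uniq (cs ++ Q ++ P).
  rewrite cat_uniq ucs uQP andbT /=; apply/hasPn => z zQP; rewrite /= inS0 //.
have hdB : forall c', c' \in cs -> k * l + l.-1 <= deg adj setT c'.
  by move=> c' /csB; rewrite inE.
have hsz : size (Q ++ P) + size cs * l <= k * l + l.
  rewrite size_cat sQ sP -/c.
  have : (k - c) * l + c * l = k * l by rewrite -mulnDl subnK.
  lia.
have l0 : 0 < l by lia.
have [Qb [sQb stQb uQb]] := bigstars sym irr x0 l0 u1 hdB hsz.
set W := (Qb ++ Q) ++ P.
have sW1 : size (Qb ++ Q) = k * l.
  rewrite size_cat sQb sQ -/c -mulnDl subnKC //.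
have stW : stars adj x0 l (Qb ++ Q) := stars_cat sQb stQb stQ.
have uW : uniq W by rewrite /W -catA.
have sW : size W = k * l + l by rewrite size_cat sW1 sP.
exists (fun i : 'I_(k * l + l) => nth x0 W i); split.
  move=> i j /eqP; rewrite nth_uniq ?sW // => /eqP; exact: val_inj.
have nW : forall q : nat, q < k * l -> nth x0 W q = nth x0 (Qb ++ Q) q.
  by move=> q hq; rewrite /W nth_cat sW1 hq.
have nP : forall q, k * l <= q -> nth x0 W q = nth x0 P (q - k * l).
  by move=> q hq; rewrite /W nth_cat sW1 ltnNge hq.
move=> i j; rewrite /starsPath_adj.
have il := ltn_ord i; have jl := ltn_ord j.
case: ifP => [/andP [ik jk] | _].
  move=> /andP [/eqP hdiv hmod]; rewrite !nW //.
  have di := divn_eq i l; have dj := divn_eq j l.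
  rewrite hdiv in di.
  case: (boolP (i %% l == 0)) hmod => [/eqP i0 | i0] /= hmod.
    have e : j - j %% l = i.
      by move: di; rewrite i0 addn0 => di; rewrite {1}dj addnK -di.
    rewrite sym -e; apply: stW; by rewrite ?sW1.
  have j0 : j %% l = 0 by apply/eqP; move: hmod; case: (j %% l == 0).
  have e : i - i %% l = j by rewrite {1}di addnK {2}dj j0 addn0.
  rewrite -e; apply: stW; by rewrite ?sW1.
case: ifP => [/andP [ik jk] | _ //].
move=> /orP [/eqP e | /eqP e]; rewrite !nP //.
  rewrite -e subSn //; apply: (sortedP x0 spP); rewrite sP; exact: aux1 e ik jl.
rewrite sym -e subSn //; apply: (sortedP x0 spP); rewrite sP; exact: aux1 e jk il.
Qed.
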